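(* For every positive integer $n$, $$(2x+1)\sum_{k=1}^nk(k+1)(2k+1)(-1)^{n-k}w_k(x)^2=n(n+1)(n+2)w_n(x)w_{n+1}(x),$$ where $w_m(x)=\sum_{k=1}^m w(m,k)x^{k-1}$ with $w(m,k)=\frac1k\binom{m-1}{k-1}\binom{m+k}{k-1}$.
   Context: The identity is an identity of polynomials in $x$. *)

(* Defs.v *)
From mathcomp Require Import all_boot all_order all_algebra.
Set Implicit Arguments. Unset Strict Implicit. Unset Printing Implicit Defensive.
Import Order.TTheory GRing.Theory Num.Theory.
Local Open Scope ring_scope.

Definition wcoef (m k : nat) : rat :=
  ('C(m.-1, k.-1) * 'C(m + k, k.-1))%:R / k%:R.

Definition wpoly (m : nat) : {poly rat} :=
  \sum_(1 <= k < m.+1) wcoef m k *: 'X^(k.-1).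

(* Main.v *)
Require Import Defs.
From mathcomp Require Import all_boot all_order all_algebra.
From mathcomp Require Import ring lra.
Import GRing.Theory Num.Theory.
Local Open Scope ring_scope.

Definition ff (y : rat) (j : nat) : rat := \prod_(t < j) (y - t%:R).

Lemma ffS y j : ff y j.+1 = y * ff (y - 1) j.
Proof.
rewrite /ff big_ord_recl /= subr0; congr (_ * _); apply: eq_bigr => t _.
rewrite /bump /= add1n -addn1 natrD; ring.
Qed.

Lemma ffSr y j : ff y j.+1 = ff y j * (y - j%:R).
Proof. by rewrite /ff big_ord_recr. Qed.

Lemma ff_nat a j : (a ^_ j)%:R = ff a%:R j.
Proof.
elim: j a => [|j IH] a; first by rewrite ffactn0 /ff big_ord0.
rewrite ffactnS ffS natrM IH; case: a => [|a]; first by rewrite !mul0r.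
by rewrite /= -addn1 natrD addrK.
Qed.

Lemma wcoefE m k : wcoef m k.+1 =
  ff (m.-1)%:R k * ff (m + k.+1)%:R k / (k`!%:R ^+ 2 * k.+1%:R).
Proof.
rewrite /wcoef /= -!ff_nat -!bin_ffact !natrM; field.
by rewrite (_ : 1 + k%:R = k.+1%:R) ?pnatr_eq0 -?lt0n ?fact_gt0 // -addn1 natrD addrC.
Qed.

Lemma nff n k : n%:R * ff (n.-1)%:R k = ff n%:R k.+1.
Proof. by case: n => [|n]; rewrite ffS ?mul0r //= -addn1 natrD addrK. Qed.

Lemma ffS' a j : ff a.+1%:R j.+1 = a.+1%:R * ff a%:R j.
Proof. by rewrite ffS -addn1 natrD addrK. Qed.

Lemma wcoef0 m : wcoef m 0 = 0.
Proof. by rewrite /wcoef invr0 mulr0. Qed.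

Lemma wcoef1 m : wcoef m 1 = 1.
Proof. by rewrite /wcoef !bin0 divr1. Qed.

Lemma scal n i :
  (2 * n + 3)%:R * (2 * wcoef n.+1 i + wcoef n.+1 i.+1)
  = (n + 3)%:R * wcoef n.+2 i.+1 + n%:R * wcoef n i.+1.
Proof.
case: i => [|j].
  rewrite wcoef0 !wcoef1 !natrD. ring.
rewrite !wcoefE. rewrite [n%:R * (_ / _)]mulrA [n%:R * _]mulrA nff /=.
set x := n%:R.
set u := ff x j.
set v := ff (n.+1 + j.+1)%:R j.
have e1 : ff (n.+1 + j.+2)%:R j.+1 = (n.+1 + j.+2)%:R * v.
  by rewrite addnS ffS'.
have e2 : ff x j.+1 = u * (x - j%:R) by rewrite ffSr.
have e3 : ff (n.+1)%:R j.+1 = n.+1%:R * u by rewrite ffS'.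
have e4 : ff (n.+2 + j.+2)%:R j.+1 = (n.+2 + j.+2)%:R * ff (n.+2 + j.+1)%:R j.
  by rewrite addnS ffS'.
have e5 : ff (n.+2 + j.+1)%:R j * (n.+3)%:R = (n.+2 + j.+1)%:R * v.
  rewrite [in RHS]addSn -ffS' ffSr; congr (_ * _).
  by rewrite (_ : (n.+1 + j.+1).+1 = n.+3 + j)%N ?natrD ?addrK // !addSn !addnS.
have e6 : ff x j.+2 = u * (x - j%:R) * (x - j.+1%:R) by rewrite ffSr e2.
have e7 : ff (n + j.+2)%:R j.+1 = v * (x + 2%:R).
  rewrite ffSr (_ : (n + j.+2 = n.+1 + j.+1)%N); last by rewrite addnS addSn.
  congr (_ * _).
  rewrite (_ : (n.+1 + j.+1 = j + (n + 2))%N); last by rewrite addnC !addnS addn0.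
  rewrite !natrD /x; ring.
have e8 : ff (n.+2 + j.+1)%:R j = (n.+2 + j.+1)%:R * v / (n.+3)%:R.
  by rewrite -e5 mulfK // pnatr_eq0.
rewrite e1 e2 e3 e4 e6 e7 e8 factS.
rewrite /x !natrD !natrM /= !mulrS.
field.
have hj : 0 <= j%:R :> rat by rewrite ler0n.
have hn : 0 <= n%:R :> rat by rewrite ler0n.
have hf : 0 < j`!%:R :> rat by rewrite ltr0n fact_gt0.
by apply/and5P; split; apply: lt0r_neq0; nra.
Qed.

Lemma coef_wpoly m i : (0 < m)%N -> (wpoly m)`_i = wcoef m i.+1.
Proof.
move=> m0; rewrite /wpoly big_add1 /= big_mkord -(poly_def m (fun k => wcoef m k.+1)) coef_poly.
case: ltnP => // h.
by rewrite /wcoef /= bin_small ?mul0n ?mul0r // prednK.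
Qed.

Lemma rec n : (2%:R *: 'X + 1) * ((2 * n + 3)%:R * wpoly n.+1)
  = (n + 3)%:R * wpoly n.+2 + n%:R * wpoly n :> {poly rat}.
Proof.
apply/polyP => i.
rewrite mulrDl mul1r -scalerAl coefD coefZ coefXM !coefD !mulr_natl !coefMn.
have -> : (wpoly n)`_i *+ n = wcoef n i.+1 *+ n.
  case: n => [|n]; first by rewrite mulr0n.
  by rewrite coef_wpoly.
have -> : (if i == 0%N then 0 else (wpoly n.+1)`_i.-1 *+ (2 * n + 3)) = wcoef n.+1 i *+ (2 * n + 3).
  case: i => [|i]; first by rewrite wcoef0 mul0rn.
  by rewrite coef_wpoly.
rewrite (coef_wpoly n.+1 i isT) (coef_wpoly n.+2 i isT).
rewrite -(mulr_natl (wcoef n.+1 i) (2*n+3)) -(mulr_natl (_ * _) 2) -(mulr_natl (wcoef n.+1 i.+1)) -(mulr_natl (wcoef n.+2 i.+1)) -(mulr_natl (wcoef n i.+1)).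
by rewrite -scal mulrDr mulrCA.
Qed.

Lemma mainl (n : nat) :
  (2%:R *: 'X + 1) *
    (\sum_(1 <= k < n.+1)
        (k * (k + 1) * (2 * k + 1))%:R * (-1) ^+ (n - k) * (wpoly k) ^+ 2)
  = (n * (n + 1) * (n + 2))%:R * wpoly n * wpoly n.+1 :> {poly rat}.
Proof.
elim: n => [|n IH]; first by rewrite big_geq // mulr0 !mul0r.
rewrite big_nat_recr //= subnn expr0 mulr1.
rewrite (eq_big_nat _ _ (F2 := fun k => - ((k * (k + 1) * (2 * k + 1))%:R * (-1) ^+ (n - k) * (wpoly k) ^+ 2))); last first.
  by move=> k /andP[_ hk]; rewrite subSn // exprS mulN1r mulrN mulNr.
rewrite sumrN mulrDr mulrN IH.
set P := (2%:R *: 'X + 1 : {poly rat}).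
have -> : P * ((n.+1 * (n.+1 + 1) * (2 * n.+1 + 1))%:R * wpoly n.+1 ^+ 2)
  = (n.+1 * n.+2)%:R * wpoly n.+1 * (P * ((2 * n + 3)%:R * wpoly n.+1)).
  rewrite !natrM !natrD; ring.
rewrite rec !natrM !natrD; ring.
Qed.

Theorem lemma4p6 (n : nat) (hn : (0 < n)%N) :
  (2%:R *: 'X + 1) *
    (\sum_(1 <= k < n.+1)
        (k * (k + 1) * (2 * k + 1))%:R * (-1) ^+ (n - k) * (wpoly k) ^+ 2)
  = (n * (n + 1) * (n + 2))%:R * wpoly n * wpoly n.+1 :> {poly rat}.
Proof. exact: mainl. Qed.
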